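(* Let $M(n)$ denote the maximum of $\sigma_2(G)$ over all connected graphs $G$ with $n$ vertices. Then $M(n)=\frac{n^4}{32}+O(n^3)$ as $n\to\infty$.
   Context: All graphs are finite, simple, undirected. For a connected graph $G$ and $u\in V(G)$, the eccentricity $\varepsilon_G(u)=\max_{v\in V(G)} d_G(u,v)$, where $d_G$ is the shortest-path distance. The second Zagreb eccentricity index is $\sigma_2(G)=\sum_{uv\in E(G)}\varepsilon_G(u)\varepsilon_G(v)$. *)

(* Defs.v *)
From mathcomp Require Import all_boot all_order all_algebra.
Set Implicit Arguments. Unset Strict Implicit. Unset Printing Implicit Defensive.
Import Order.TTheory GRing.Theory Num.Theory.

Section Graphs.
Variable n : nat.
Implicit Types (E : {set 'I_n * 'I_n}) (u v : 'I_n).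

Definition adj E : rel 'I_n := fun u v => (u, v) \in E.

Definition simpleb E : bool :=
  [forall u, (u, u) \notin E] &&
  [forall u, forall v, ((u, v) \in E) == ((v, u) \in E)].

Definition connectedb E : bool :=
  [forall u, forall v, connect (adj E) u v].

Fixpoint walk E (k : nat) u v : bool :=
  match k with
  | 0 => u == v
  | k'.+1 => [exists w, adj E u w && walk E k' w v]
  end.

(* shortest-path distance: least k with a walk of length k
   (for connected graphs such k exists and is < n) *)
Definition dist E u v : nat := find (fun k => walk E k u v) (iota 0 n).

Definition ecc E u : nat := \max_(v : 'I_n) dist E u v.

Definition sigma2 E : nat :=
  \sum_(u : 'I_n) \sum_(v : 'I_n | (u < v)%N && adj E u v) ecc E u * ecc E v.

End Graphs.

Definition M (n : nat) : nat :=
  \max_(E : {set 'I_n * 'I_n} | simpleb E && connectedb E) sigma2 E.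

(* Main.v *)
Require Import Defs.
From mathcomp Require Import all_boot all_order all_algebra zify ring lra.
Set Implicit Arguments. Unset Strict Implicit. Unset Printing Implicit Defensive.
Local Open Scope nat_scope.


Section Walks.
Variable n : nat.
Variable E : {set 'I_n * 'I_n}.

Lemma walk_cat a b u w v : walk E a u w -> walk E b w v -> walk E (a + b) u v.
Proof.
elim: a u => [|a IH] u /=; first by move/eqP->.
case/existsP=> z /andP[Hz Hw] Hb; rewrite ?addSn /=.
apply/existsP; exists z; rewrite Hz /=; exact: IH.
Qed.

Lemma walk_split a b u v : walk E (a + b) u v -> exists2 w, walk E a u w & walk E b w v.
Proof.
elim: a u => [|a IH] u /=; first by exists u.
rewrite ?addSn /= => /existsP[z /andP[Hz Hw]].
have [w H1 H2] := IH _ Hw; exists w => //.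
apply/existsP; exists z; by rewrite Hz.
Qed.

Lemma walk1 u v : adj E u v -> walk E 1 u v.
Proof. by move=> H; apply/existsP; exists v; rewrite H eqxx. Qed.

Lemma dist_le k u v : walk E k u v -> dist E u v <= k.
Proof.
move=> Hw; rewrite /dist.
case: (ltnP k n) => Hk; last by apply: leq_trans (find_size _ _) _; rewrite size_iota.
rewrite leqNgt; apply/negP => /(before_find 0).
by rewrite nth_iota // add0n Hw.
Qed.

Lemma dist_le_n u v : dist E u v <= n.
Proof. by rewrite /dist; apply: leq_trans (find_size _ _) _; rewrite size_iota. Qed.

Lemma dist_walk u v : dist E u v < n -> walk E (dist E u v) u v.
Proof.
rewrite /dist => H.
have Hh : has (fun k => walk E k u v) (iota 0 n) by rewrite has_find size_iota.
have := nth_find 0 Hh; by rewrite nth_iota // add0n.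
Qed.

Lemma path_walk u p : path (adj E) u p -> walk E (size p) u (last u p).
Proof.
elim: p u => [|z p IH] u /=; first by rewrite eqxx.
case/andP=> Hz Hp; apply/existsP; exists z; rewrite Hz /=; exact: IH.
Qed.

Lemma connect_dist u v : connect (adj E) u v -> dist E u v < n.
Proof.
case/connectP=> p Hp ->.
case: (shortenP Hp) => p' Hp' Hu _.
have Hs : size p' < n.
  have := max_card (mem (u :: p')); rewrite card_ord.
  by move/card_uniqP: Hu => -> /=.
exact: leq_ltn_trans (dist_le (path_walk Hp')) Hs.
Qed.
End Walks.


Lemma amgm D r : 4 * (D * r) <= (D + r) * (D + r).
Proof.
case: (leqP D r) => h.
  rewrite -(subnKC h); move: (r - D) => t.
  have e : (D + (D + t)) * (D + (D + t)) = 4 * (D * (D + t)) + t * t by ring.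
  by rewrite e leq_addr.
move/ltnW: h => h; rewrite -(subnKC h); move: (D - r) => t.
have e : (r + t + r) * (r + t + r) = 4 * ((r + t) * r) + t * t by ring.
by rewrite e leq_addr.
Qed.

Lemma fin (n D A s q : nat) (HD : D < n) (hq : n - D.+1 = q)
  (Hsig : 2 * s <= A * (D * D)) (HA : A <= q * q + 3 * q + 3 * n) :
  32 * s <= n ^ 4 + 96 * n ^ 3.
Proof.
have Hn : n = D + (q + 1) by lia.
have HA' : A <= (q + 1) * (q + 1) + 6 * n.
  have e : (q + 1) * (q + 1) = q * q + 2 * q + 1 by ring.
  rewrite e; lia.
have h5 : A * (D * D) <= ((q + 1) * (q + 1) + 6 * n) * (D * D) by apply: leq_mul.
have e5 : ((q + 1) * (q + 1) + 6 * n) * (D * D) = (D * (q + 1)) * (D * (q + 1)) + 6 * (n * (D * D)) by ring.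
have key : 4 * (D * (q + 1)) <= n * n by rewrite Hn; exact: amgm.
have e4 : n ^ 4 = (n * n) * (n * n) by ring.
have key2 : 16 * ((D * (q + 1)) * (D * (q + 1))) <= n ^ 4.
  have e6 : 16 * ((D * (q + 1)) * (D * (q + 1))) = (4 * (D * (q + 1))) * (4 * (D * (q + 1))) by ring.
  by rewrite e4 e6; apply: leq_mul.
have k3 : n * (D * D) <= n ^ 3.
  have e7 : n ^ 3 = n * (n * n) by ring.
  by rewrite e7; apply: leq_mul => //; apply: leq_mul; apply: ltnW.
move: Hsig h5 key2 k3; rewrite e5.
move: (D * (q + 1) * (D * (q + 1))) (n * (D * D)) (A * (D * D)) (n ^ 4) (n ^ 3) => X Y Z P R.
lia.
Qed.

Lemma sum_ind m c : \sum_(k < m) (val k == c : nat) <= 1.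
Proof.
suff -> : \sum_(k < m) (val k == c : nat) = (c < m) by case: (c < m).
elim: m => [|m IH]; first by rewrite big_ord0.
rewrite big_ord_recr /= IH.
case: (ltngtP c m) => h /=.
- by rewrite ltnS ltnW.
- by rewrite ltnS leqNgt h.
- by rewrite h ltnSn.
Qed.

Lemma sum_indT m c : \sum_(k in [set: 'I_m]) (val k == c : nat) <= 1.
Proof.
rewrite (eq_bigl xpredT); first exact: sum_ind.
by move=> k; rewrite in_setT.
Qed.

Section Upper.
Variable n : nat.
Variable E : {set 'I_n * 'I_n}.
Hypothesis HS : simpleb E.
Hypothesis HC : connectedb E.

Lemma adj_sym u v : adj E u v = adj E v u.
Proof. by case/andP: HS => _ /forallP /(_ u) /forallP /(_ v) /eqP. Qed.

Lemma adj_irr u : ~~ adj E u u.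
Proof. by case/andP: HS => /forallP /(_ u). Qed.

Lemma dist_lt u v : dist E u v < n.
Proof. apply: connect_dist; by move/forallP: HC => /(_ u) /forallP /(_ v). Qed.

Lemma dist_edge x u v : adj E u v -> dist E x v <= (dist E x u).+1.
Proof.
move=> H; rewrite -addn1; apply: dist_le.
exact: walk_cat (dist_walk (dist_lt x u)) (walk1 H).
Qed.

Lemma ecc_le u : ecc E u <= n.-1.
Proof. apply/bigmax_leqP => v _; have := dist_lt u v; lia. Qed.

Lemma layer x k : k <= ecc E x -> exists w, dist E x w == k.
Proof.
have hn : 0 < #|'I_n| by rewrite card_ord; case: (n) x => [[]|].
have [y Hy] := eq_bigmax (fun v => dist E x v) hn.
rewrite /ecc Hy => Hk.
have Hw := dist_walk (dist_lt x y).
rewrite -(subnKC Hk) in Hw.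
have [w H1 H2] := walk_split Hw.
exists w; rewrite eqn_leq (dist_le H1) /=.
rewrite leqNgt; apply/negP => Hlt.
have := dist_le (walk_cat (dist_walk (dist_lt x w)) H2).
lia.
Qed.


Lemma sigma2_upper : 32 * sigma2 E <= n ^ 4 + 96 * n ^ 3.
Proof.
have [n0|npos] := posnP n.
  by rewrite /sigma2 big1 // => u; have := ltn_ord u; lia.
pose x0 : 'I_n := Ordinal npos.
pose D := \max_(u : 'I_n) ecc E u.
have hn : 0 < #|'I_n| by rewrite card_ord.
have [x Hx] := eq_bigmax (ecc E) hn.
have HD : D < n by rewrite /D Hx; have := ecc_le x; lia.
have HeD : forall u, ecc E u <= D by move=> u; exact: leq_bigmax.
have HDx : D = ecc E x by [].
clearbody D.
pose pk (k : nat) := odflt x [pick w | dist E x w == k].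
have pk_spec : forall k, k <= D -> dist E x (pk k) = k.
  move=> k Hk; rewrite /pk; case: pickP => [w /eqP //|H].
  have Hk' : k <= ecc E x by rewrite -HDx.
  have [w Hw] := layer Hk'.
  by have := H w; rewrite Hw.
clearbody pk.
pose f := fun k : 'I_D.+1 => pk k.
have Hinj : injective f.
  move=> a b; rewrite /f => /(congr1 (dist E x)).
  rewrite (pk_spec _ (ltn_ord a)) (pk_spec _ (ltn_ord b)).
  exact: val_inj.
pose P := f @: [set: 'I_D.+1].
have cardP : #|P| = D.+1 by rewrite card_imset // cardsT card_ord.
have cardQ : #|~: P| = n - D.+1.
  have := cardsC P; rewrite card_ord cardP; lia.
have H3 : forall u, \sum_(v in P) (adj E u v : nat) <= 3.
  move=> u; rewrite big_imset /=; last by move=> a b _ _; apply: Hinj.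
  pose d := dist E x u.
  apply: (@leq_trans (\sum_(k in [set: 'I_D.+1]) ((val k == d.-1 : nat) + (val k == d) + (val k == d.+1)))).
    apply: leq_sum => k _; rewrite /f.
    case Ha: (adj E u (pk k)) => //.
    have h1 := dist_edge x Ha; rewrite adj_sym in Ha; have h2 := dist_edge x Ha.
    rewrite (pk_spec _ (ltn_ord k)) -/d in h1 h2.
    have e1 : d.-1 = d - 1 by lia.
    move: h1 h2; rewrite -[nat_of_ord k]/(val k) => h1 h2.
    have [->|[->|->]] : val k = d.-1 \/ val k = d \/ val k = d.+1 by lia.
    - by rewrite eqxx.
    - by rewrite eqxx; case: eqP; case: eqP.
    - by rewrite eqxx; case: eqP; case: eqP.
  rewrite !big_split /=.
  have := sum_indT (D.+1) d.-1; have := sum_indT (D.+1) d; have := sum_indT (D.+1) d.+1.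
  move=> a b c; exact: (leq_trans (leq_add (leq_add c b) a)).
have splitP : forall F : 'I_n -> nat,
    \sum_v F v = \sum_(v in P) F v + \sum_(v in ~: P) F v.
  move=> F; rewrite (bigID (mem P)) /=; congr (_ + _).
  by apply: eq_bigl => v; rewrite in_setC.
set Q := ~: P.
have HA : \sum_u \sum_v (adj E u v : nat) <= #|Q| * #|Q| + 3 * #|Q| + 3 * n.
  rewrite (eq_bigr _ (fun u _ => splitP _)) big_split /=.
  have T1 : \sum_u \sum_(v in P) (adj E u v : nat) <= 3 * n.
    apply: (@leq_trans (\sum_(u : 'I_n) 3)); first exact: leq_sum.
    by rewrite big_const_ord iter_addn_0 mulnC.
  have T2 : \sum_(u in P) \sum_(v in Q) (adj E u v : nat) <= 3 * #|Q|.
    rewrite exchange_big /=.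
    apply: (@leq_trans (\sum_(v in Q) 3)); last by rewrite sum_nat_const mulnC.
    apply: leq_sum => v _.
    rewrite (eq_bigr (fun u => (adj E v u : nat))); first exact: H3.
    by move=> u _; rewrite adj_sym.
  have T3 : \sum_(u in Q) \sum_(v in Q) (adj E u v : nat) <= #|Q| * #|Q|.
    apply: (@leq_trans (\sum_(u in Q) \sum_(v in Q) 1)).
      by apply: leq_sum => u _; apply: leq_sum => v _; case: (adj E u v).
    rewrite (eq_bigr (fun _ => #|Q|)) ?sum_nat_const // => u _. by rewrite muln1.
  rewrite (splitP (fun u => \sum_(v in Q) (adj E u v : nat))).
  have H := leq_add T1 (leq_add T2 T3); rewrite -/Q. apply: leq_trans H _. apply: eq_leq; rewrite addnC; congr (_ + _); exact: addnC.
rewrite /Q cardQ in HA.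
set A := \sum_u \sum_v (adj E u v : nat) in HA.
pose K := D * D.
have S1 : sigma2 E <= \sum_(u : 'I_n) \sum_(v : 'I_n) (((u < v) && adj E u v) : nat) * K.
  rewrite /sigma2; apply: leq_sum => u _; rewrite big_mkcond /=; apply: leq_sum => v _.
  case: (_ && _) => //=; rewrite mul1n; exact: leq_mul (HeD u) (HeD v).
have S2 : \sum_(u : 'I_n) \sum_(v : 'I_n) (((u < v) && adj E u v) : nat) * K +
          \sum_(u : 'I_n) \sum_(v : 'I_n) (((u < v) && adj E u v) : nat) * K = A * K.
  rewrite {2}exchange_big -big_split /= /A big_distrl; apply: eq_bigr => u _.
  rewrite -big_split big_distrl; apply: eq_bigr => v _ /=.
  rewrite (adj_sym v u).
  case: (ltngtP u v) => [h|h|/val_inj ->]; rewrite ?(negbTE (adj_irr _)) //=.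
  all: rewrite /= ?mul0n ?addn0 ?add0n //.
have HDn : D <= n by lia.
have Hsig : 2 * sigma2 E <= A * K by rewrite mul2n -addnn -S2; exact: leq_add.
exact: (fin HD (erefl _) Hsig HA).
Qed.

End Upper.


Section Lower.
Variable m : nat.
Local Notation N := m.+1.
Variable b : nat.
Hypothesis hb : b <= N.

Definition E0 : {set 'I_N * 'I_N} :=
  [set p : 'I_N * 'I_N | (p.1 != p.2) && (((b <= p.1) && (b <= p.2)) || (p.1.+1 == p.2) || (p.2.+1 == p.1))].

Lemma adj0 u v : adj E0 u v = (u != v) && (((b <= u) && (b <= v)) || (u.+1 == v) || (v.+1 == u)).
Proof. by rewrite /adj inE. Qed.

Lemma E0_simple : simpleb E0.
Proof.
apply/andP; split; apply/forallP => u.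
  by rewrite -/(adj E0 u u) adj0 eqxx.
apply/forallP => v; rewrite -/(adj E0 u v) -/(adj E0 v u) !adj0.
apply/eqP; rewrite eq_sym; congr (_ && _).
by rewrite (andbC (b <= v)) orbAC.
Qed.

Lemma adj_step k : k.+1 < N -> adj E0 (inord k) (inord k.+1) && adj E0 (inord k.+1) (inord k).
Proof.
move=> hk; rewrite !adj0 !inordK //; last by apply: ltnW.
have -> : (inord k != inord k.+1 :> 'I_N).
  by apply/eqP => /(congr1 (@nat_of_ord N)); rewrite !inordK //; [lia | apply: ltnW].
have -> : (inord k.+1 != inord k :> 'I_N).
  by apply/eqP => /(congr1 (@nat_of_ord N)); rewrite !inordK //; [lia | apply: ltnW].
by rewrite eqxx !orbT.
Qed.

Lemma E0_conn0 k : k < N -> connect (adj E0) (inord 0) (inord k) && connect (adj E0) (inord k) (inord 0).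
Proof.
elim: k => [|k IH] hk; first by rewrite connect0.
case/andP: (IH (ltnW hk)) => h1 h2.
case/andP: (adj_step hk) => a1 a2.
apply/andP; split.
  exact: connect_trans h1 (connect1 a1).
exact: connect_trans (connect1 a2) h2.
Qed.

Lemma E0_connected : connectedb E0.
Proof.
apply/forallP => u; apply/forallP => v.
case/andP: (E0_conn0 (ltn_ord u)) => _ h1.
case/andP: (E0_conn0 (ltn_ord v)) => h2 _.
rewrite !inord_val in h1 h2.
exact: connect_trans h1 h2.
Qed.

Lemma walk_lip k u v : walk E0 k u v -> minn u b <= minn v b + k.
Proof.
elim: k u => [|k IH] u /=; first by move/eqP->; rewrite addn0.
case/existsP=> w /andP[Hw Hk].
have := IH _ Hk; move: Hw; rewrite adj0 => /andP[_ H].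
lia.
Qed.

Lemma ecc_ge (u : 'I_N) : b <= u -> b <= ecc E0 u.
Proof.
move=> hu.
rewrite /ecc; apply: (@leq_trans (dist E0 u (inord 0))); last exact: leq_bigmax.
case: (ltnP (dist E0 u (inord 0)) N) => h.
  have := walk_lip (dist_walk h); rewrite inordK //; lia.
lia.
Qed.


Lemma cnt : \sum_(v : 'I_N) (b <= v : nat) = N - b.
Proof.
have -> : \sum_(v : 'I_N) (b <= v : nat) = \sum_(v < N | true && (b <= v)) 1.
  by rewrite [RHS]big_mkcond /=; apply: eq_bigr => v _; case: (b <= v).
have := (@big_geq_mkord nat 0 addn b N xpredT (fun _ => 1)); rewrite sum_nat_const_nat muln1 => <-.
done.
Qed.

Lemma inner (u : 'I_N) : b <= u ->
  \sum_(v : 'I_N) ((b <= u) && (b <= v) && (u != v) : nat) = (N - b).-1.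
Proof.
move=> hu.
rewrite -cnt (bigD1 u) //= (bigD1 u (P := xpredT)) //= eqxx andbF add0n hu /=.
rewrite add0n; apply: eq_bigr => v hv.
by rewrite eq_sym hv andbT.
Qed.

Lemma sigma2_lower : (N - b) * (N - b).-1 * (b * b) <= 2 * sigma2 E0.
Proof.
pose c (u v : 'I_N) := ((b <= u) && (b <= v) && (u < v) : nat).
pose T := \sum_(u : 'I_N) \sum_(v : 'I_N) c u v.
have H1 : T * (b * b) <= sigma2 E0.
  rewrite /T /sigma2 big_distrl; apply: leq_sum => u _.
  rewrite big_distrl [X in _ <= X]big_mkcond /=; apply: leq_sum => v _.
  rewrite /c; case H: (_ && _ && _) => //=.
  move/andP: H => [/andP[h1 h2] h3].
  have -> : adj E0 u v.
    rewrite adj0 h1 h2 /= andbT; apply/eqP => e; by rewrite e ltnn in h3.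
  by rewrite h3 mul1n; apply: leq_mul; apply: ecc_ge.
have H2 : T + T = (N - b) * (N - b).-1.
  rewrite {2}/T exchange_big -big_split /=.
  rewrite (eq_bigr (fun u : 'I_N => (b <= u : nat) * (N - b).-1)); last first.
    move=> u _; rewrite -big_split /=.
    case: (leqP b u) => hu.
      rewrite -(inner hu) mul1n; apply: eq_bigr => v _; rewrite /c hu /=.
      case: (ltngtP u v) => h.
      - have -> : (u != v) = true by apply/eqP => e; move: h; rewrite e ltnn.
        by rewrite andbT andbF addn0.
      - have -> : (u != v) = true by apply/eqP => e; move: h; rewrite e ltnn.
        by rewrite andbT andbF add0n.
      - by rewrite (val_inj h) eqxx !andbF.
    rewrite mul0n; apply: big1 => v _; rewrite /c.
    have -> : (b <= u) = false by rewrite leqNgt hu.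
    by rewrite andbF.
  by rewrite -big_distrl /= cnt.
by rewrite -H2 mul2n -addnn mulnDl; apply: leq_add.
Qed.

End Lower.
Lemma arith (N b s : nat) : 2 <= N -> b.*2 <= N -> N <= b.*2 + 1 ->
  (N - b) * (N - b).-1 * (b * b) <= 2 * s -> N ^ 4 <= 32 * s + 4 * N ^ 3.
Proof.
move=> h2 hb1 hb2 hs.
have [a ha] : exists a, N - b = a by eexists.
rewrite ha in hs.
have ha2 : N <= a.*2 by lia.
have hx : (N - 1) * (N - 1) <= (b.*2) * (b.*2) by apply: leq_mul; lia.
have hy : N * (N - 2) <= a.*2 * (a.*2 - 2) by apply: leq_mul; lia.
have e : a.*2 * (a.*2 - 2) * (b.*2 * b.*2) = 16 * (a * a.-1 * (b * b)).
  case: a {ha ha2 hy hs} => [|a] /=; first by rewrite !muln0 mul0n.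
  rewrite -!mul2n; nia.
have h3 : N * (N - 2) * ((N - 1) * (N - 1)) <= 16 * (a * a.-1 * (b * b)).
  by rewrite -e; apply: leq_mul.
have h4 : N ^ 4 <= N * (N - 2) * ((N - 1) * (N - 1)) + 4 * N ^ 3.
  case: N h2 {hb1 hb2 ha ha2 hx hy h3 hs} => [|[|k]] // _.
  rewrite !subSS subn0; nia.
lia.
Qed.

Import Order.TTheory GRing.Theory Num.Theory.
Local Open Scope ring_scope.

Theorem corollary2p12 :
  exists (C : rat) (N : nat), forall n : nat, (N <= n)%N ->
    `| (M n)%:R - (n%:R) ^+ 4 / 32 | <= C * (n%:R) ^+ 3.
Proof.
exists 3%:R, 2%N => n hn.
case: n hn => [|m] // hn.
pose b := (m.+1)./2.
have hb : (b <= m.+1)%N by rewrite /b; lia.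
have hpos : (0 < #|[pred E : {set 'I_m.+1 * 'I_m.+1} | simpleb E && connectedb E]|)%N.
  apply/card_gt0P; exists (E0 m b); by rewrite inE E0_simple E0_connected.
have [E1 HE1 HM] := eq_bigmax_cond (@sigma2 m.+1) hpos.
have HM' : M m.+1 = sigma2 E1 by rewrite /M HM.
move: HE1; rewrite inE => /andP[HS HC].
have up := sigma2_upper HS HC.
have low : (sigma2 (E0 m b) <= M m.+1)%N.
  by rewrite /M; apply: leq_bigmax_cond; rewrite E0_simple E0_connected.
have low2 := leq_trans (sigma2_lower hb) (leq_mul (leqnn 2) low).
have hb1 : (b.*2 <= m.+1 <= b.*2 + 1)%N.
  by rewrite /b; have := odd_double_half m.+1; case: (odd m.+1) => /=; lia.
case/andP: hb1 => hb1 hb2.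
have low3 := arith hn hb1 hb2 low2.
rewrite -HM' in up.
move: up low3; move: (M m.+1) => s up low0.
have up' : 32%:R * s%:R <= (m.+1)%:R ^+ 4 + 96%:R * (m.+1)%:R ^+ 3 :> rat.
  by rewrite -!natrX -!natrM -natrD ler_nat.
have low' : (m.+1)%:R ^+ 4 <= 32%:R * s%:R + 4%:R * (m.+1)%:R ^+ 3 :> rat.
  by rewrite -!natrX -!natrM -natrD ler_nat.
rewrite ler_norml; apply/andP; split; lra.
Qed.
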